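(* Let $\mathcal{F}=(W,R)$ be a frame. Then: (1) $\mathcal{F}\models_{\mathsf{B}^{\Box}}\Box J_2\varphi\to J_2\varphi$ (for all formulas $\varphi$) iff $R$ is reflexive; (2) $\mathcal{F}\models_{\mathsf{B}^{\Box}}\Box J_2\varphi\to\Box\Box J_2\varphi$ iff $R$ is transitive; (3) $\mathcal{F}\models_{\mathsf{B}^{\Box}}\Diamond J_2\varphi\to\Box\Diamond J_2\varphi$ iff $R$ is Euclidean.
   Context: Formulas are built from a countably infinite set of propositional variables and the constants $0,1$ using the unary connectives $\neg$, $J_2$, $\Box$ and the binary connective $\vee$; $\varphi\to\psi:=\neg\varphi\vee\psi$ and $\Diamond\varphi:=\neg\Box\neg\varphi$. Let $\mathbf{WK}^e$ be the algebra on $\{0,\tfrac12,1\}$ with $\neg0=1$, $\neg1=0$, $\neg\tfrac12=\tfrac12$; $a\vee b=\tfrac12$ if $a=\tfrac12$ or $b=\tfrac12$, otherwise $a\vee b=\max(a,b)$; $J_2(1)=1$, $J_2(\tfrac12)=J_2(0)=0$. A frame is a pair $(W,R)$ with $W\neq\emptyset$ and $R\subseteq W\times W$. A Bochvar-Kripke model on $(W,R)$ is $(W,R,v)$ with $v:W\times\mathrm{Fm}\to\{0,\tfrac12,1\}$ such that each $v(w,\cdot)$ commutes with $\neg,\vee,J_2,0,1$ as computed in $\mathbf{WK}^e$, and: $v(w,\Box\varphi)=\tfrac12$ iff $v(w,\varphi)=\tfrac12$; $v(w,\Box\varphi)=1$ iff $v(w,\varphi)\neq\tfrac12$ and $v(s,\varphi)=1$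 for all $s$ with $wRs$; $v(w,\Box\varphi)=0$ iff $v(w,\varphi)\neq\tfrac12$ and $v(s,\varphi)\neq1$ for some $s$ with $wRs$. $\mathcal{F}\models_{\mathsf{B}^{\Box}}\varphi$ means: for every Bochvar-Kripke model $(W,R,v)$ on $\mathcal{F}$ and every $w\in W$, $v(w,\varphi)=1$. $R$ is Euclidean if $wRs$ and $wRt$ imply $sRt$. *)

(* Defs.v *)
Inductive Fm : Type :=
| FVar : nat -> Fm
| FZero : Fm
| FOne : Fm
| FNeg : Fm -> Fm
| FJ2 : Fm -> Fm
| FBox : Fm -> Fm
| FOr : Fm -> Fm -> Fm.

Definition FImp (a b : Fm) : Fm := FOr (FNeg a) b.
Definition FDia (a : Fm) : Fm := FNeg (FBox (FNeg a)).

(* The three truth values of WK^e: 0, 1/2, 1. *)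
Inductive WK : Type := W0 | Wh | W1.

Definition wk_neg (a : WK) : WK :=
  match a with W0 => W1 | Wh => Wh | W1 => W0 end.

Definition wk_or (a b : WK) : WK :=
  match a, b with
  | Wh, _ => Wh
  | _, Wh => Wh
  | W1, _ => W1
  | _, W1 => W1
  | W0, W0 => W0
  end.

Definition wk_J2 (a : WK) : WK :=
  match a with W1 => W1 | _ => W0 end.

Definition BKModel (W : Type) (R : W -> W -> Prop) (v : W -> Fm -> WK) : Prop :=
  forall w : W,
    v w FZero = W0 /\
    v w FOne = W1 /\
    (forall a, v w (FNeg a) = wk_neg (v w a)) /\
    (forall a b, v w (FOr a b) = wk_or (v w a) (v w b)) /\
    (forall a, v w (FJ2 a) = wk_J2 (v w a)) /\
    (forall a,
        (v w (FBox a) = Wh <-> v w a = Wh) /\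
        (v w (FBox a) = W1 <-> (v w a <> Wh /\ forall s, R w s -> v s a = W1)) /\
        (v w (FBox a) = W0 <-> (v w a <> Wh /\ exists s, R w s /\ v s a <> W1))).

Definition frame_valid (W : Type) (R : W -> W -> Prop) (phi : Fm) : Prop :=
  forall v : W -> Fm -> WK, BKModel W R v -> forall w : W, v w phi = W1.

Definition reflexiveR {W : Type} (R : W -> W -> Prop) : Prop := forall w, R w w.
Definition transitiveR {W : Type} (R : W -> W -> Prop) : Prop :=
  forall w s t, R w s -> R s t -> R w t.
Definition euclideanR {W : Type} (R : W -> W -> Prop) : Prop :=
  forall w s t, R w s -> R w t -> R s t.

(* Main.v *)
Require Import Defs.
From Stdlib Require Import ClassicalEpsilon.

Section S.
Variable W : Type.
Variable R : W -> W -> Prop.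

Fixpoint ev (V : W -> nat -> WK) (a : Fm) : W -> WK :=
  match a with
  | FVar n => fun w => V w n
  | FZero => fun _ => W0
  | FOne => fun _ => W1
  | FNeg b => fun w => wk_neg (ev V b w)
  | FJ2 b => fun w => wk_J2 (ev V b w)
  | FOr b c => fun w => wk_or (ev V b w) (ev V c w)
  | FBox b => fun w =>
      match ev V b w with
      | Wh => Wh
      | _ => if excluded_middle_informative (forall s, R w s -> ev V b s = W1)
             then W1 else W0
      end
  end.

Lemma ev_BK V : BKModel W R (fun w a => ev V a w).
Proof.
  intro w; split; [reflexivity|]; split; [reflexivity|].
  split; [reflexivity|]; split; [reflexivity|]; split; [reflexivity|].
  intro a; simpl.
  destruct (ev V a w) eqn:E;
   [destruct excluded_middle_informative as [H|H]| |destruct excluded_middle_informative as [H|H]];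
   (split; [split; congruence|]); (split; [split; [intro X; try discriminate X|]|]);
   try (split; [congruence|]); try (intros [_ X]; exact X); try tauto;
   try (intros [_ [s [Hs Hs2]]]; exfalso; eauto);
   try (intros [_ X]; exfalso; eauto);
   try (intros; discriminate); try congruence.
  all: split; [intros _; split; [congruence|] | intros; reflexivity].
  all: (apply Classical_Prop.NNPP; intro Hn; apply H; intros s Hs;
      apply Classical_Prop.NNPP; intro Hn2; apply Hn; eauto).
Qed.

Section M.
Variable v : W -> Fm -> WK.
Hypothesis Hm : BKModel W R v.

Lemma vneg w a : v w (FNeg a) = wk_neg (v w a). Proof. apply Hm. Qed.
Lemma vor w a b : v w (FOr a b) = wk_or (v w a) (v w b). Proof. apply Hm. Qed.
Lemma vJ2 w a : v w (FJ2 a) = wk_J2 (v w a). Proof. apply Hm. Qed.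
Ltac gb Hm w a := destruct (Hm w) as [_ [_ [_ [_ [_ Hb]]]]]; destruct (Hb a) as [[Wa Wb] [[B1 B2] [C1 C2]]].
Lemma box1 w a : v w a <> Wh -> (forall s, R w s -> v s a = W1) -> v w (FBox a) = W1.
Proof. intros. gb Hm w a. auto. Qed.
Lemma box0 w a s : v w a <> Wh -> R w s -> v s a <> W1 -> v w (FBox a) = W0.
Proof. intros. gb Hm w a. eauto. Qed.
Lemma boxinv1 w a : v w (FBox a) = W1 -> forall s, R w s -> v s a = W1.
Proof. intros H. gb Hm w a. apply B1 in H. tauto. Qed.
Lemma boxinv0 w a : v w (FBox a) = W0 -> exists s, R w s /\ v s a <> W1.
Proof. intros H. gb Hm w a. apply C1 in H. tauto. Qed.
Lemma boxWh w a : v w (FBox a) = Wh -> v w a = Wh.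
Proof. intros H. gb Hm w a. auto. Qed.
Lemma J2nh w a : v w (FJ2 a) <> Wh.
Proof. rewrite vJ2. destruct (v w a); discriminate. Qed.
Lemma boxJ2nh w a : v w (FBox (FJ2 a)) <> Wh.
Proof. intro H. apply boxWh in H. apply (J2nh _ _ H). Qed.
Lemma DiaJ2nh w a : v w (FDia (FJ2 a)) <> Wh.
Proof. unfold FDia. rewrite vneg. intro H. destruct (v w (FBox (FNeg (FJ2 a)))) eqn:E; try discriminate.
  apply boxWh in E. rewrite vneg in E. destruct (v w (FJ2 a)) eqn:E2; try discriminate. eapply J2nh; eauto. Qed.
End M.
End S.

Lemma or1 x : x <> Wh -> wk_or W1 x = W1. Proof. destruct x; simpl; congruence. Qed.
Lemma negJ2nh W R v (Hm : BKModel W R v) w a : v w (FNeg (FJ2 a)) <> Wh.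
Proof. rewrite (vneg W R v Hm). pose proof (J2nh W R v Hm w a) as H. destruct (v w (FJ2 a)); simpl; intro X; try discriminate X; apply H; reflexivity. Qed.

Theorem mainTheorem14 (W : Type) (HW : inhabited W) (R : W -> W -> Prop) :
  ((forall phi, frame_valid W R (FImp (FBox (FJ2 phi)) (FJ2 phi))) <-> reflexiveR R) /\
  ((forall phi, frame_valid W R (FImp (FBox (FJ2 phi)) (FBox (FBox (FJ2 phi))))) <-> transitiveR R) /\
  ((forall phi, frame_valid W R (FImp (FDia (FJ2 phi)) (FBox (FDia (FJ2 phi))))) <-> euclideanR R).
Proof.
  split; [|split]; split.
  - intros H w0. apply Classical_Prop.NNPP; intro Hn.
    pose (V := fun x (_ : nat) => if excluded_middle_informative (R w0 x) then W1 else W0).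
    pose (v := fun w a => ev W R V a w).
    assert (Hm : BKModel W R v) by apply ev_BK.
    assert (HV : forall x, v x (FVar 0) = V x 0) by reflexivity.
    specialize (H (FVar 0) v Hm w0). unfold FImp in H.
    rewrite (vor W R v Hm), (vneg W R v Hm) in H.
    erewrite (box1 W R v Hm) in H.
    + rewrite (vJ2 W R v Hm), HV in H. unfold V in H.
      destruct excluded_middle_informative; [contradiction|discriminate].
    + apply (J2nh W R v Hm).
    + intros s Hs. rewrite (vJ2 W R v Hm), HV. unfold V.
      destruct excluded_middle_informative; [reflexivity|contradiction].
  - intros Hr phi v Hm w. unfold FImp.
    rewrite (vor W R v Hm), (vneg W R v Hm).
    destruct (v w (FBox (FJ2 phi))) eqn:E.
    + rewrite (vJ2 W R v Hm). destruct (v w phi); reflexivity.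
    + exfalso; eapply boxJ2nh; eauto.
    + rewrite (boxinv1 W R v Hm _ _ E w (Hr w)). reflexivity.
  - intros H w0 s0 t0 H1 H2. apply Classical_Prop.NNPP; intro Hn.
    pose (V := fun x (_ : nat) => if excluded_middle_informative (R w0 x) then W1 else W0).
    pose (v := fun w a => ev W R V a w).
    assert (Hm : BKModel W R v) by apply ev_BK.
    assert (HV : forall x, v x (FVar 0) = V x 0) by reflexivity.
    specialize (H (FVar 0) v Hm w0). unfold FImp in H.
    rewrite (vor W R v Hm), (vneg W R v Hm) in H.
    erewrite (box1 W R v Hm) in H.
    + erewrite (box0 W R v Hm w0 _ s0) in H. discriminate.
      * apply (boxJ2nh W R v Hm).
      * exact H1.
      * erewrite (box0 W R v Hm s0 _ t0). discriminate.
        -- apply (J2nh W R v Hm).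
        -- exact H2.
        -- rewrite (vJ2 W R v Hm), HV. unfold V.
           destruct excluded_middle_informative; [contradiction|discriminate].
    + apply (J2nh W R v Hm).
    + intros s Hs. rewrite (vJ2 W R v Hm), HV. unfold V.
      destruct excluded_middle_informative; [reflexivity|contradiction].
  - intros Ht phi v Hm w. unfold FImp.
    rewrite (vor W R v Hm), (vneg W R v Hm).
    destruct (v w (FBox (FJ2 phi))) eqn:E.
    + simpl. apply or1. intro E2. apply (boxWh W R v Hm) in E2. eapply boxJ2nh; eauto.
    + exfalso; eapply boxJ2nh; eauto.
    + rewrite (box1 W R v Hm). reflexivity.
      * apply (boxJ2nh W R v Hm).
      * intros s Hs. apply (box1 W R v Hm). apply (J2nh W R v Hm).
        intros t Hst. eapply (boxinv1 W R v Hm); eauto.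
  - intros H w0 s0 t0 H1 H2. apply Classical_Prop.NNPP; intro Hn.
    pose (V := fun x (_ : nat) => if excluded_middle_informative (R s0 x) then W0 else W1).
    pose (v := fun w a => ev W R V a w).
    assert (Hm : BKModel W R v) by apply ev_BK.
    assert (HV : forall x, v x (FVar 0) = V x 0) by reflexivity.
    specialize (H (FVar 0) v Hm w0). unfold FImp in H.
    rewrite (vor W R v Hm), (vneg W R v Hm) in H.
    assert (D1 : v w0 (FDia (FJ2 (FVar 0))) = W1).
    { unfold FDia. rewrite (vneg W R v Hm). erewrite (box0 W R v Hm w0 _ t0). reflexivity.
      - apply (negJ2nh W R v Hm).
      - exact H2.
      - rewrite (vneg W R v Hm), (vJ2 W R v Hm), HV. unfold V.
        destruct excluded_middle_informative; [contradiction|discriminate]. }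
    rewrite D1 in H.
    erewrite (box0 W R v Hm w0 _ s0) in H. discriminate.
    + apply (DiaJ2nh W R v Hm).
    + exact H1.
    + unfold FDia. rewrite (vneg W R v Hm). erewrite (box1 W R v Hm). discriminate.
      * apply (negJ2nh W R v Hm).
      * intros y Hy. rewrite (vneg W R v Hm), (vJ2 W R v Hm), HV. unfold V.
        destruct excluded_middle_informative; [reflexivity|contradiction].
  - intros He phi v Hm w. unfold FImp.
    rewrite (vor W R v Hm), (vneg W R v Hm).
    destruct (v w (FDia (FJ2 phi))) eqn:E.
    + simpl. apply or1. intro E2. apply (boxWh W R v Hm) in E2. eapply DiaJ2nh; eauto.
    + exfalso; eapply DiaJ2nh; eauto.
    + simpl. unfold FDia in E. rewrite (vneg W R v Hm) in E.
      destruct (v w (FBox (FNeg (FJ2 phi)))) eqn:E2; simpl in E; try discriminate.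
      apply (boxinv0 W R v Hm) in E2. destruct E2 as [t [Hwt Ht]].
      rewrite (box1 W R v Hm). reflexivity.
      * apply (DiaJ2nh W R v Hm).
      * intros s Hs. unfold FDia. rewrite (vneg W R v Hm).
        erewrite (box0 W R v Hm s _ t). reflexivity.
        -- apply (negJ2nh W R v Hm).
        -- eapply He; eauto.
        -- exact Ht.
Qed.
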